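(* Let $q$ be a prime and $1\le i\le q$. Let $\vdash$ be the least structural finitary consequence relation extending $\vDash_{\mathsf{L}^i_q}$ in which the rule $(exp_i)$: $i(\varphi\wedge\neg\varphi)/\bot$ holds for all formulas $\varphi$. Then for every set of formulas $\Gamma\cup\{\varphi\}$: $\Gamma\vdash\varphi$ iff either $\Gamma\vDash_{\mathsf{L}^i_q}\varphi$, or $\Gamma\vDash_{\mathsf{L}^i_q}i(\psi\wedge\neg\psi)$ for some formula $\psi$.
   Context: $\mathbf{ŁV}_{q+1}=(\{0,\frac1q,\dots,1\},\neg,\to)$ with $\neg x=1-x$, $x\to y=\min\{1,1-x+y\}$; $x\oplus y=\neg x\to y$, $x\vee y=(x\to y)\to y$, $x\wedge y=\neg(\neg x\vee\neg y)$. $i\alpha$ denotes $\alpha\oplus\cdots\oplus\alpha$ ($i$ times); $\bot$ denotes $\neg(r\to r)$ for a propositional variable $r$. $F_{i/q}=\{x:x\ge i/q\}$, $\mathsf{L}^i_q=\langle\mathbf{ŁV}_{q+1},F_{i/q}\rangle$ with matrix consequence $\vDash_{\mathsf{L}^i_q}$ (compact, being a finite matrix logic). *)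

(* Defs.v *)
From HB Require Import structures.
From mathcomp Require Import all_boot all_order all_algebra.
From Stdlib Require Import List.
Set Implicit Arguments. Unset Strict Implicit. Unset Printing Implicit Defensive.
Import Order.TTheory GRing.Theory Num.Theory.

Inductive formula : Type :=
| Var : nat -> formula
| Neg : formula -> formula
| Imp : formula -> formula -> formula.

Definition Oplus (a b : formula) : formula := Imp (Neg a) b.
Definition Vee (a b : formula) : formula := Imp (Imp a b) b.
Definition Wedge (a b : formula) : formula := Neg (Vee (Neg a) (Neg b)).

(* n a = a (+) ... (+) a  (n times); only used for n >= 1 (mult 0 a := a by convention) *)
Fixpoint mult (n : nat) (a : formula) : formula :=
  match n with
  | 0 => a
  | 1 => a
  | S m => Oplus a (mult m a)
  end.

Definition Bot : formula := Neg (Imp (Var 0) (Var 0)).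

Fixpoint subst (s : nat -> formula) (f : formula) : formula :=
  match f with
  | Var n => s n
  | Neg a => Neg (subst s a)
  | Imp a b => Imp (subst s a) (subst s b)
  end.

Definition fset := formula -> Prop.
Definition img (s : nat -> formula) (G : fset) : fset :=
  fun f => exists g, G g /\ f = subst s g.

Local Open Scope ring_scope.

Definition in_LV (q : nat) (x : rat) : Prop :=
  exists k : nat, (k <= q)%N /\ x = k%:R / q%:R.

Definition lneg (x : rat) : rat := 1 - x.
Definition limp (x y : rat) : rat := Num.min 1 (1 - x + y).

Fixpoint eval (v : nat -> rat) (f : formula) : rat :=
  match f with
  | Var n => v n
  | Neg a => lneg (eval v a)
  | Imp a b => limp (eval v a) (eval v b)
  end.

Definition designated (q i : nat) (x : rat) : Prop := i%:R / q%:R <= x.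

Definition Lcons (q i : nat) (G : fset) (f : formula) : Prop :=
  forall v : nat -> rat, (forall n, in_LV q (v n)) ->
    (forall g, G g -> designated q i (eval v g)) -> designated q i (eval v f).

Local Close Scope ring_scope.

Definition crel := fset -> formula -> Prop.

Definition is_consequence (R : crel) : Prop :=
  (forall (G : fset) f, G f -> R G f) /\
  (forall (G D : fset) f, (forall g, G g -> D g) -> R G f -> R D f) /\
  (forall (G D : fset) f, (forall d, D d -> R G d) ->
      R (fun g => G g \/ D g) f -> R G f).

Definition structural (R : crel) : Prop :=
  forall (s : nat -> formula) G f, R G f -> R (img s G) (subst s f).

Definition finitary (R : crel) : Prop :=
  forall G f, R G f ->
    exists l : list formula, (forall g, In g l -> G g) /\ R (fun g => In g l) f.

Definition extends (R1 R2 : crel) : Prop := forall G f, R1 G f -> R2 G f.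

Definition has_exp (i : nat) (R : crel) : Prop :=
  forall phi, R (fun g => g = mult i (Wedge phi (Neg phi))) Bot.

Definition admissible (q i : nat) (R : crel) : Prop :=
  is_consequence R /\ structural R /\ finitary R /\
  extends (Lcons q i) R /\ has_exp i R.

Definition is_least (q i : nat) (R : crel) : Prop :=
  admissible q i R /\ (forall R', admissible q i R' -> extends R R').

(* Main.v *)
Require Import Defs.
From mathcomp Require Import all_boot all_order all_algebra.
From mathcomp Require Import ring lra zify.
From Stdlib Require Import Classical ClassicalEpsilon.
Set Implicit Arguments. Unset Strict Implicit. Unset Printing Implicit Defensive.
Import Order.TTheory GRing.Theory Num.Theory.
Local Open Scope ring_scope.

Lemma lneg_LV q x : (0 < q)%N -> in_LV q x -> in_LV q (lneg x).
Proof.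
move=> q0 [k [kq ->]]; exists (q - k)%N; split; first by rewrite leq_subr.
have qn : q%:R != 0 :> rat by rewrite pnatr_eq0 -lt0n.
rewrite /lneg natrB // mulrBl divff //.
Qed.


Lemma limp_LV' q x y : (0 < q)%N -> in_LV q x -> in_LV q y -> in_LV q (limp x y).
Proof.
move=> q0 [k [kq ->]] [m [mq ->]].
have qn : q%:R != 0 :> rat by rewrite pnatr_eq0 -lt0n.
have qp : 0 < q%:R :> rat by rewrite ltr0n.
rewrite /limp; case: (leqP k m) => km.
- exists q; split => //; rewrite divff // min_l //.
  have : k%:R <= m%:R :> rat by rewrite ler_nat.
  move=> h; have h' : k%:R / q%:R <= m%:R / q%:R :> rat.
    by rewrite ler_wpM2r // invr_ge0 ltW.
  by rewrite -addrA lerDl addrC subr_ge0.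
- exists (q - k + m)%N; split.
    lia.
  rewrite min_r; last first.
    have : m%:R < k%:R :> rat by rewrite ltr_nat.
    move=> h; have h' : m%:R / q%:R <= k%:R / q%:R :> rat.
      by rewrite ler_wpM2r // ?invr_ge0 ?ltW.
    by rewrite -addrA gerDl addrC subr_le0.
  by rewrite natrD natrB // mulrDl mulrBl divff.
Qed.

Definition valid q (v : nat -> rat) := forall n, in_LV q (v n).

Lemma eval_LV q v f : (0 < q)%N -> valid q v -> in_LV q (eval v f).
Proof.
move=> q0 hv; elim: f => [n|a IH|a IHa b IHb] /=; first exact: hv.
- exact: lneg_LV.
- exact: limp_LV'.
Qed.

Lemma eval_subst v s f : eval v (subst s f) = eval (fun n => eval v (s n)) f.
Proof. by elim: f => [n|a IH|a IHa b IHb] //=; rewrite ?IH ?IHa ?IHb. Qed.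

Lemma subst_mult s n a : subst s (mult n a) = mult n (subst s a).
Proof.
elim: n => [|n IH] //; case: n IH => [|n] IH //.
by rewrite [mult _ a]/= [subst _ _]/= IH.
Qed.

Lemma Lcons_struct q i s G f : (0 < q)%N ->
  Lcons q i G f -> Lcons q i (img s G) (subst s f).
Proof.
move=> q0 H v hv hG; rewrite eval_subst; apply: H.
  by move=> n; apply: eval_LV.
by move=> g Gg; rewrite -eval_subst; apply: hG; exists g.
Qed.

Lemma Bot_not q i v : (0 < q)%N -> (1 <= i)%N -> ~ designated q i (eval v Bot).
Proof.
move=> q0 i1; rewrite /designated /= /limp /lneg addrNK minxx subrr.
apply/negP; rewrite -ltNge divr_gt0 // ltr0n //.
Qed.

Lemma Lcons_cut q i G D f : (forall d, D d -> Lcons q i G d) ->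
  Lcons q i (fun g => G g \/ D g) f -> Lcons q i G f.
Proof.
move=> HD H v hv hG; apply: H => // g [Gg|Dg]; first exact: hG.
exact: HD.
Qed.

Lemma Lcons_mono q i G D f : (forall g, G g -> D g) -> Lcons q i G f -> Lcons q i D f.
Proof. by move=> GD H v hv hD; apply: H => // g /GD; apply: hD. Qed.

Lemma eval_local f : exists N, forall v v' : nat -> rat,
  (forall k, (k < N)%N -> v k = v' k) -> eval v f = eval v' f.
Proof.
elim: f => [n|a [N IH]|a [Na IHa] b [Nb IHb]].
- by exists n.+1 => v v' h /=; apply: h.
- by exists N => v v' h /=; rewrite (IH v v').
- exists (maxn Na Nb) => v v' h /=; rewrite (IHa v v') ?(IHb v v') // => k kN;
  apply: h; apply: (leq_trans kN); by rewrite ?leq_maxl ?leq_maxr.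
Qed.

Definition cex q i (l : list formula) f v :=
  valid q v /\ (forall g, List.In g l -> designated q i (eval v g)) /\
  ~ designated q i (eval v f).

Definition good q i (G : fset) f n (a : nat -> rat) :=
  forall l, (forall g, List.In g l -> G g) ->
    exists v, cex q i l f v /\ forall k, (k < n)%N -> v k = a k.

Definition upd (a : nat -> rat) n c := fun k => if k == n then c else a k.

Lemma not_good q i G f n a : ~ good q i G f n a ->
  exists l, (forall g, List.In g l -> G g) /\
    forall v, cex q i l f v -> ~ (forall k, (k < n)%N -> v k = a k).
Proof.
move=> H; apply: NNPP => H1; apply: H => l hl; apply: NNPP => H2.
apply: H1; exists l; split => // v hv ha; apply: H2; by exists v.
Qed.

Lemma cex_app q i l1 l2 f v : cex q i (l1 ++ l2) f v -> cex q i l1 f v /\ cex q i l2 f v.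
Proof.
move=> [hv [hl hf]]; split; split => //; split => // g hg; apply: hl;
  apply: List.in_or_app; auto.
Qed.

Lemma good_step q i G f n a : good q i G f n a ->
  exists c, good q i G f n.+1 (upd a n c).
Proof.
move=> Hg; apply: NNPP => H.
have Hc : forall c, ~ good q i G f n.+1 (upd a n c).
  by move=> c hc; apply: H; exists c.
have claim : forall m, exists l, (forall g, List.In g l -> G g) /\
   forall k, (k < m)%N -> forall v, cex q i l f v ->
      (forall j, (j < n)%N -> v j = a j) -> v n <> k%:R / q%:R.
  elim=> [|m [l1 [hl1 IH]]]; first by exists nil.
  have [l2 [hl2 H2]] := not_good (Hc (m%:R / q%:R)).
  exists (l1 ++ l2); split.
    by move=> g hg; case: (List.in_app_or _ _ _ hg) => ?; [apply: hl1 | apply: hl2].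
  move=> k; rewrite ltnS leq_eqVlt => /orP [/eqP -> | km] v hv ha hn.
  + have [_ hv2] := cex_app hv; apply: (H2 v hv2) => j; rewrite ltnS leq_eqVlt.
    rewrite /upd; case: eqP => [->|_] //= jn; exact: ha.
  + have [hv1 _] := cex_app hv; exact: (IH k km v hv1 ha hn).
have [l [hl H3]] := claim q.+1.
have [v [[hv hrest] ha]] := Hg l hl.
have [k [kq hk]] := hv n.
exact: (H3 k kq v (conj hv hrest) ha hk).
Qed.

Lemma ex_pick q i G f n a : exists c : rat,
  good q i G f n a -> good q i G f n.+1 (upd a n c).
Proof.
case: (classic (good q i G f n a)) => h.
  by have [c hc] := good_step h; exists c.
by exists 0.
Qed.

Definition pick q i G f n a : rat :=
  proj1_sig (constructive_indefinite_description _ (ex_pick q i G f n a)).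

Lemma pickP q i G f n a : good q i G f n a -> good q i G f n.+1 (upd a n (pick q i G f n a)).
Proof. exact: (proj2_sig (constructive_indefinite_description _ (ex_pick q i G f n a))). Qed.

Fixpoint seqA q i G f n : nat -> rat :=
  match n with
  | 0 => fun _ => 0
  | S m => upd (seqA q i G f m) m (pick q i G f m (seqA q i G f m))
  end.

Lemma seqA_good q i G f : good q i G f 0 (seqA q i G f 0) ->
  forall n, good q i G f n (seqA q i G f n).
Proof. move=> h0; elim=> [|n IH] //=; exact: pickP. Qed.

Lemma seqA_stable q i G f n k : (k < n)%N -> seqA q i G f n k = seqA q i G f k.+1 k.
Proof.
elim: n => [|n IH] //; rewrite ltnS leq_eqVlt => /orP [/eqP -> //| kn].
by rewrite [LHS]/= /upd (ltn_eqF kn) IH.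
Qed.

Lemma compact q i G f : Lcons q i G f ->
  exists l : list formula, (forall g, List.In g l -> G g) /\ Lcons q i (fun g => List.In g l) f.
Proof.
move=> H; apply: NNPP => Hn.
have h0 : good q i G f 0 (seqA q i G f 0).
  move=> l hl; apply: NNPP => H1; apply: Hn; exists l; split => // v hv hl2.
  apply: NNPP => hf; apply: H1; exists v; split => //.
set w := fun k => seqA q i G f k.+1 k.
have hg := seqA_good h0.
have agree : forall N k, (k < N)%N -> w k = seqA q i G f N k.
  by move=> N k kN; rewrite /w seqA_stable.
have wv : valid q w.
  move=> n; have [v [[hv _] ha]] := hg n.+1 nil (fun g (h : List.In g nil) => match h with end).
  by rewrite /w -ha.
have [Nf hNf] := eval_local f.
have : designated q i (eval w f).
  apply: H => // g Gg.
  have [Ng hNg] := eval_local g.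
  have [v [[hv [hl hf]] ha]] := hg (maxn Ng Nf) (g :: nil)
     (fun g' h => match h with or_introl e => eq_ind _ G Gg _ e | or_intror h' => match h' with end end).
  rewrite (hNg w v); first by apply: hl; left.
  move=> k kN; rewrite (agree (maxn Ng Nf)) ?ha //; apply: (leq_trans kN); by rewrite leq_maxl.
have [v [[hv [hl hf]] ha]] := hg Nf nil (fun g (h : List.In g nil) => match h with end).
by rewrite (hNf w v) // => k kN; rewrite (agree Nf) ?ha.
Qed.

Local Close Scope ring_scope.

Definition R0 q i : crel := fun G phi =>
  Lcons q i G phi \/ exists psi, Lcons q i G (mult i (Wedge psi (Neg psi))).

Lemma R0_adm q i : (0 < q)%N -> admissible q i (R0 q i).
Proof.
move=> q0; split; [|split; [|split; [|split]]].
- split; [|split].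
  + by move=> G f Gf; left => v hv hG; apply: hG.
  + move=> G D f GD [h|[psi h]]; [left|right; exists psi]; exact: Lcons_mono h.
  + move=> G D f HD H.
    case: (classic (exists d, D d /\ exists psi, Lcons q i G (mult i (Wedge psi (Neg psi))))).
      by move=> [d [_ h]]; right.
    move=> Hn; have HD' : forall d, D d -> Lcons q i G d.
      move=> d Dd; case: (HD d Dd) => // h; exfalso; apply: Hn; by exists d.
    case: H => [h|[psi h]]; [left|right; exists psi]; exact: Lcons_cut HD' h.
- move=> s G f [h|[psi h]]; [left|right; exists (subst s psi)].
    exact: Lcons_struct.
  by have := Lcons_struct (s:=s) q0 h; rewrite subst_mult.
- move=> G f [h|[psi h]].
    have [l [hl hc]] := compact h; exists l; split => //; by left.
  have [l [hl hc]] := compact h; exists l; split => //; right; by exists psi.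
- by move=> G f h; left.
- move=> phi; right; exists phi => v hv hG; exact: hG.
Qed.

Lemma R0_least q i R : (0 < q)%N -> (1 <= i)%N -> admissible q i R -> extends (R0 q i) R.
Proof.
move=> q0 i1 [[Rref [Rmono Rcut]] [_ [_ [Rext Rexp]]]] G f [h|[psi h]].
  exact: Rext.
set m := mult i (Wedge psi (Neg psi)).
have hm : R G m by apply: Rext.
have hB : R G Bot.
  apply: (Rcut G (fun g => g = m)); first by move=> d ->.
  apply: (Rmono (fun g => g = m)); first by move=> g; right.
  exact: Rexp.
apply: (Rcut G (fun g => g = Bot)); first by move=> d ->.
apply: (Rmono (fun g => g = Bot)); first by move=> g; right.
apply: Rext => v hv hG; exfalso; apply: (Bot_not (v:=v) q0 i1); exact: hG.
Qed.

Theorem proposition4p2 (q i : nat) (hq : prime q) (hi1 : (1 <= i)%N) (hiq : (i <= q)%N) :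
  (exists R : crel, is_least q i R) /\
  (forall R : crel, is_least q i R ->
     forall (G : fset) (phi : formula),
       R G phi <->
       (Lcons q i G phi \/
        exists psi : formula, Lcons q i G (mult i (Wedge psi (Neg psi))))).
Proof.
have q0 : (0 < q)%N by exact: prime_gt0.
split.
  exists (R0 q i); split; first exact: R0_adm.
  by move=> R' h; apply: R0_least.
move=> R [hadm hleast] G phi; split.
  by move=> h; exact: (hleast (R0 q i) (R0_adm i q0) G phi h).
exact: (R0_least q0 hi1 hadm).
Qed.
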